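(* There is an absolute constant $C$ such that for every integer $k\ge2$, every set $S$ of $k$-sparse finite real sequences (each having at most $k$ nonzero coordinates, with arbitrary lengths and arbitrary real coordinates) has doubling dimension at most $Ck\log k$ under $d_{\mathrm{ERP}}$.
   Context: Edit Distance with Real Penalty (ERP): for finite real sequences $r,s$ (possibly of different lengths), let $m'$ be the length of the longer one. A gap insertion inserts a zero-valued coordinate at any position. For $p\ge m'$ let $R_p$ (resp. $S_p$) be the set of length-$p$ sequences obtainable from $r$ (resp. $s$) by gap insertions. Then $d_{\mathrm{ERP}}(r,s)=\min_{p\ge m',\ \tilde r\in R_p,\ \tilde s\in S_p}\|\tilde r-\tilde s\|_1$. The doubling constant $\lambda$ of a (pseudo)metric space is the smallest number such that every ball (centered in the space) can be covered by $\lambda$ balls of half the radius; the doubling dimension is $\mathrm{ddim}=\log_2\lambda$. *)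

(* Defs.v *)
From Stdlib Require Import Reals Lra List ClassicalEpsilon.
Import ListNotations.
Open Scope R_scope.

Inductive gap_ins : list R -> list R -> Prop :=
| gap_nil : gap_ins [] []
| gap_keep : forall x l l', gap_ins l l' -> gap_ins (x :: l) (x :: l')
| gap_zero : forall l l', gap_ins l l' -> gap_ins l (0 :: l').

(* L1 distance between two sequences (used on sequences of equal length). *)
Fixpoint l1_dist (a b : list R) : R :=
  match a, b with
  | x :: a', y :: b' => Rabs (x - y) + l1_dist a' b'
  | _, _ => 0
  end.

Definition erp_values (r s : list R) (v : R) : Prop :=
  exists (p : nat) (rt st : list R),
    (Nat.max (length r) (length s) <= p)%nat /\
    gap_ins r rt /\ gap_ins s st /\
    length rt = p /\ length st = p /\
    v = l1_dist rt st.

Definition is_glb (E : R -> Prop) (m : R) : Prop :=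
  (forall v, E v -> m <= v) /\ (forall b, (forall v, E v -> b <= v) -> b <= m).

(* d_ERP(r,s): the minimum (= infimum, which is attained) of erp_values r s. *)
Definition d_erp (r s : list R) : R :=
  epsilon (inhabits 0) (fun m => is_glb (erp_values r s) m).

Definition k_sparse (k : nat) (x : list R) : Prop :=
  (length (filter (fun a => if Req_EM_T a 0 then false else true) x) <= k)%nat.

Definition ball (S : list R -> Prop) (d : list R -> list R -> R)
  (c : list R) (rho : R) (y : list R) : Prop := S y /\ d c y <= rho.

(* ddim(S,d) <= D  iff the doubling constant lambda satisfies lambda <= 2^D,
   i.e. some natural N <= 2^D is such that every ball (centered in S) of
   radius rho > 0 is covered by at most N balls of radius rho/2 centered in S. *)
Definition ddim_le (S : list R -> Prop) (d : list R -> list R -> R) (D : R) : Prop :=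
  exists N : nat, INR N <= Rpower 2 D /\
    forall (x : list R) (rho : R), S x -> 0 < rho ->
      exists cs : list (list R),
        (length cs <= N)%nat /\ (forall c, In c cs -> S c) /\
        (forall y, ball S d x rho y -> exists c, In c cs /\ ball S d c (rho / 2) y).

(* Main.v *)
Require Import Defs.
From Stdlib Require Import Reals List.
From Stdlib Require Import Lra Lia Classical ClassicalEpsilon Arith.
Import ListNotations.
Open Scope R_scope.

Definition nz (a : R) : bool := if Req_EM_T a 0 then false else true.
Definition comp (l : list R) : list R := filter nz l.

Lemma gap_len a b : gap_ins a b -> (length a <= length b)%nat.
Proof. induction 1; simpl; lia. Qed.

Lemma gap_in a b : gap_ins a b -> forall z, In z a -> In z b.
Proof. induction 1; simpl; intuition. Qed.

Lemma gap_in_rev a b : gap_ins a b -> forall z, In z b -> z = 0 \/ In z a.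
Proof.
  induction 1; simpl; intros z Hz; try tauto.
  destruct Hz as [->|Hz]; [tauto|]. destruct (IHgap_ins z Hz); tauto.
  destruct Hz as [<-|Hz]; [tauto|]. auto.
Qed.

Lemma l1_nonneg a b : 0 <= l1_dist a b.
Proof.
  revert b; induction a as [|x a IH]; destruct b; simpl; try lra.
  specialize (IH b). pose proof (Rabs_pos (x - r)). lra.
Qed.

Lemma l1_in L1 : forall L2, length L1 = length L2 -> forall a, In a L2 ->
  exists b, In b L1 /\ Rabs (b - a) <= l1_dist L1 L2.
Proof.
  induction L1 as [|x L1 IH]; destruct L2 as [|y L2]; simpl; intros Hl a Ha;
    try discriminate; try contradiction.
  destruct Ha as [<-|Ha].
  - exists x. split; auto. pose proof (l1_nonneg L1 L2). lra.
  - destruct (IH L2 ltac:(lia) a Ha) as [b [Hb1 Hb2]].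
    exists b. split; auto. pose proof (Rabs_pos (x - y)). lra.
Qed.

Lemma gap_app l n : gap_ins l (l ++ repeat 0 n).
Proof.
  induction l; simpl.
  - induction n; simpl; constructor; auto.
  - constructor; auto.
Qed.

Lemma erp_nonempty r s : exists v, erp_values r s v.
Proof.
  set (p := Nat.max (length r) (length s)).
  exists (l1_dist (r ++ repeat 0 (p - length r)) (s ++ repeat 0 (p - length s))).
  exists p, (r ++ repeat 0 (p - length r)), (s ++ repeat 0 (p - length s)).
  repeat split; try apply gap_app; try lia;
  rewrite length_app, repeat_length; unfold p; lia.
Qed.

Lemma erp_nonneg r s v : erp_values r s v -> 0 <= v.
Proof. intros (p & rt & st & _ & _ & _ & _ & _ & ->). apply l1_nonneg. Qed.

Lemma d_erp_glb r s : is_glb (erp_values r s) (d_erp r s).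
Proof.
  unfold d_erp. apply epsilon_spec.
  destruct (completeness (fun w => erp_values r s (- w))) as [m [Hm1 Hm2]].
  - exists 0. intros w Hw. apply erp_nonneg in Hw. lra.
  - destruct (erp_nonempty r s) as [v Hv]. exists (-v). rewrite Ropp_involutive. auto.
  - exists (- m). split.
    + intros v Hv. assert (- v <= m). apply Hm1. rewrite Ropp_involutive; auto. lra.
    + intros b Hb. assert (m <= - b). apply Hm2. intros w Hw. apply Hb in Hw. lra. lra.
Qed.

Lemma comp0 l : comp (0 :: l) = comp l.
Proof. unfold comp, nz; simpl. destruct (Req_EM_T 0 0); auto; lra. Qed.

Lemma compnz a l : a <> 0 -> comp (a :: l) = a :: comp l.
Proof. intros H. unfold comp, nz; simpl. destruct (Req_EM_T a 0); auto; lra. Qed.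

Lemma align n : forall y y', (length y + length y' <= n)%nat ->
  length (comp y) = length (comp y') ->
  exists rt st, gap_ins y rt /\ gap_ins y' st /\ length rt = length st /\
    l1_dist rt st = l1_dist (comp y) (comp y').
Proof.
  induction n as [|n IH]; intros y y' Hn Hc.
  - destruct y; destruct y'; simpl in Hn; try lia.
    exists [], []. repeat split; constructor.
  - destruct y as [|a ys] eqn:Ey.
    + destruct y' as [|b ys'].
      * exists [], []. repeat split; constructor.
      * destruct (Req_EM_T b 0) as [Hb|Hb].
        -- subst b. rewrite comp0 in Hc.
           destruct (IH [] ys' ltac:(simpl in *; lia) Hc) as (rt & st & H1 & H2 & H3 & H4).
           exists (0 :: rt), (0 :: st). repeat split.
           ++ apply gap_zero; auto.
           ++ apply gap_keep; auto.
           ++ simpl; lia.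
           ++ cbn [l1_dist]. rewrite H4, comp0, Rminus_0_r, Rabs_R0. simpl; lra.
        -- exfalso. rewrite compnz in Hc; auto. simpl in Hc. lia.
    + destruct (Req_EM_T a 0) as [Ha|Ha].
      * subst a. rewrite comp0 in Hc.
        destruct (IH ys y' ltac:(simpl in *; lia) Hc) as (rt & st & H1 & H2 & H3 & H4).
        exists (0 :: rt), (0 :: st). repeat split.
        -- apply gap_keep; auto.
        -- apply gap_zero; auto.
        -- simpl; lia.
        -- cbn [l1_dist]. rewrite H4, comp0, Rminus_0_r, Rabs_R0. lra.
      * destruct y' as [|b ys'].
        -- exfalso. rewrite compnz in Hc; auto. simpl in Hc. lia.
        -- destruct (Req_EM_T b 0) as [Hb|Hb].
           ++ subst b. rewrite comp0 in Hc.
              destruct (IH (a :: ys) ys' ltac:(simpl in *; lia) Hc) as (rt & st & H1 & H2 & H3 & H4).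
              exists (0 :: rt), (0 :: st). repeat split.
              ** apply gap_zero; auto.
              ** apply gap_keep; auto.
              ** simpl; lia.
              ** cbn [l1_dist]. rewrite H4, comp0, Rminus_0_r, Rabs_R0. lra.
           ++ rewrite !compnz in Hc; auto. simpl in Hc.
              destruct (IH ys ys' ltac:(simpl in *; lia) ltac:(lia)) as (rt & st & H1 & H2 & H3 & H4).
              exists (a :: rt), (b :: st). repeat split.
              ** apply gap_keep; auto.
              ** apply gap_keep; auto.
              ** simpl; lia.
              ** rewrite !compnz; auto. cbn [l1_dist]. rewrite H4; auto.
Qed.

Lemma l1_forall2 e u v : Forall2 (fun a b => Rabs (a - b) <= e) u v ->
  l1_dist u v <= INR (length u) * e.
Proof.
  induction 1; cbn [l1_dist length]; [simpl; lra|]. rewrite S_INR. lra.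
Qed.

Lemma round_nat L : forall s, 0 <= s <= INR L ->
  exists n, (n <= L)%nat /\ Rabs (s - INR n) <= 1/2.
Proof.
  induction L as [|L IH]; intros s Hs.
  - exists 0%nat. split; auto. simpl in *. replace (s - 0) with 0 by lra.
    rewrite Rabs_R0; lra.
  - rewrite S_INR in Hs. destruct (Rle_dec s (INR L)).
    + destruct (IH s ltac:(lra)) as [n [H1 H2]]. exists n; split; auto.
    + destruct (Rle_dec s (INR L + 1/2)).
      * exists L. split; auto. unfold Rabs; destruct (Rcase_abs _); lra.
      * exists (S L). split; auto. rewrite S_INR. unfold Rabs; destruct (Rcase_abs _); lra.
Qed.

Fixpoint lists_upto (G : list R) (n : nat) : list (list R) :=
  match n with
  | O => [[]]
  | S n' => [] :: flat_map (fun q => map (cons q) (lists_upto G n')) G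
  end.

Lemma flat_map_len_const {A B} (f : A -> list B) c l :
  (forall a, length (f a) = c) -> length (flat_map f l) = (length l * c)%nat.
Proof. intros H; induction l; simpl; auto. rewrite length_app, H, IHl. lia. Qed.

Lemma lists_upto_len G n : (length (lists_upto G n) <= (length G + 1) ^ n)%nat.
Proof.
  induction n; simpl; [lia|].
  rewrite (flat_map_len_const _ (length (lists_upto G n))).
  2:{ intros; apply length_map. }
  pose proof (Nat.pow_nonzero (length G + 1) n ltac:(lia)).
  nia.
Qed.

Lemma lists_upto_in G n : forall l, (length l <= n)%nat -> (forall q, In q l -> In q G) ->
  In l (lists_upto G n).
Proof.
  induction n; intros l Hl Hq; destruct l as [|q l]; simpl in *; auto; try lia.
  right. apply in_flat_map. exists q. split; auto.
  apply in_map. apply IHn; auto. lia.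
Qed.

Lemma pick_list (P : R -> R -> Prop) u : (forall a, In a u -> exists q, P a q) ->
  exists g, Forall2 P u g.
Proof.
  induction u as [|a u IH]; intros H.
  - exists []; constructor.
  - destruct (H a (or_introl eq_refl)) as [q Hq].
    destruct IH as [g Hg]. intros; apply H; simpl; auto.
    exists (q :: g); constructor; auto.
Qed.

Lemma Forall2_in_r {A B} (P : A -> B -> Prop) u g : Forall2 P u g ->
  forall q, In q g -> exists a, P a q.
Proof. induction 1; simpl; intros q Hq; [contradiction|]. destruct Hq as [<-|Hq]; eauto. Qed.

Lemma Forall2_comb e u v g :
  Forall2 (fun a b => Rabs (a - b) <= e) u g ->
  Forall2 (fun a b => Rabs (a - b) <= e) v g ->
  Forall2 (fun a b => Rabs (a - b) <= 2 * e) u v.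
Proof.
  intros H; revert v; induction H; intros v Hv; inversion Hv; subst; constructor; auto.
  replace (x - x0) with ((x - y) + (- (x0 - y))) by ring.
  pose proof (Rabs_triang (x - y) (- (x0 - y))) as HT. rewrite Rabs_Ropp in HT. lra.
Qed.

Lemma num_bound k : (2 <= k)%nat ->
  INR (((k + 1) * (8 * k + 1) + 1) ^ k) <= Rpower 2 (10 / ln 2 * INR k * ln (INR k)).
Proof.
  intros Hk.
  assert (Hl2 : 0 < ln 2) by (rewrite <- ln_1; apply ln_increasing; lra).
  assert (HK : 0 < INR k) by (apply lt_0_INR; lia).
  unfold Rpower.
  replace (10 / ln 2 * INR k * ln (INR k) * ln 2) with (INR (10 * k) * ln (INR k))
    by (rewrite mult_INR; simpl; field; lra).
  change (exp (INR (10 * k) * ln (INR k))) with (Rpower (INR k) (INR (10 * k))).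
  rewrite Rpower_pow by auto. rewrite <- pow_INR. apply le_INR.
  rewrite Nat.pow_mul_r. apply Nat.pow_le_mono_l.
  assert (H8 : (2 ^ 8 <= k ^ 8)%nat) by (apply Nat.pow_le_mono_l; lia).
  replace (k ^ 10)%nat with (k ^ 8 * k ^ 2)%nat by (rewrite <- Nat.pow_add_r; reflexivity).
  replace (2 ^ 8)%nat with 256%nat in H8 by reflexivity.
  replace (k ^ 2)%nat with (k * k)%nat by (simpl; lia).
  generalize dependent (k ^ 8)%nat. intros. nia.
Qed.

Theorem mainTheorem11 :
  exists C : R, forall k : nat, (2 <= k)%nat ->
    forall S : list R -> Prop, (forall x, S x -> k_sparse k x) ->
      ddim_le S d_erp (C * INR k * ln (INR k)).
Proof.
  exists (10 / ln 2). intros k Hk S HS.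
  exists (((k + 1) * (8 * k + 1) + 1) ^ k)%nat. split; [apply num_bound; auto|].
  intros x rho Hx Hrho.
  assert (HK : 0 < INR k) by (apply lt_0_INR; lia).
  set (h := rho / (2 * INR k)).
  assert (Hh : 0 < h) by (unfold h; apply Rdiv_lt_0_compat; lra).
  set (M := (4 * k)%nat).
  assert (HM : INR M * h = 2 * rho) by (unfold M, h; rewrite mult_INR; simpl; field; lra).
  set (V := 0 :: comp x).
  set (G := flat_map (fun v => map (fun n => v + (INR n - INR M) * h) (seq 0 (2 * M + 1))) V).
  set (close := fun (g : list R) z => Forall2 (fun a b => Rabs (a - b) <= h / 2) (comp z) g).
  set (Q := fun g z => S z /\ d_erp x z <= rho /\ close g z).
  set (cf := fun g => epsilon (inhabits x) (fun z => S z /\ ((exists w, Q g w) -> Q g z))).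
  assert (Hcf : forall g, S (cf g) /\ ((exists w, Q g w) -> Q g (cf g))).
  { intros g. unfold cf. apply epsilon_spec.
    destruct (classic (exists w, Q g w)) as [[w Hw]|Hn].
    - exists w. split; [apply Hw|]. auto.
    - exists x. split; auto. intros; contradiction. }
  exists (map cf (lists_upto G k)). split; [|split].
  - rewrite length_map. eapply Nat.le_trans; [apply lists_upto_len|].
    apply Nat.pow_le_mono_l.
    unfold G. rewrite (flat_map_len_const _ (2 * M + 1)).
    2:{ intros; rewrite length_map, length_seq; auto. }
    unfold V. simpl length. pose proof (HS x Hx) as Hsx. unfold k_sparse in Hsx.
    unfold comp. unfold M. fold nz in Hsx.
    revert Hsx. generalize (length (filter nz x)). intros n0 Hn0. rewrite <- Nat.add_1_r. nia.
  - intros c Hc. apply in_map_iff in Hc. destruct Hc as [g [<- _]]. apply (proj1 (Hcf g)).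
  - intros y [Sy Dy].
    destruct (d_erp_glb x y) as [Hg1 Hg2].
    assert (Hv : exists v, erp_values x y v /\ v < 2 * rho).
    { destruct (classic (exists v, erp_values x y v /\ v < 2 * rho)) as [H|H]; auto.
      exfalso. assert (2 * rho <= d_erp x y); [|lra].
      apply Hg2. intros v Hv. destruct (Rlt_le_dec v (2 * rho)); auto.
      exfalso; apply H; eauto. }
    destruct Hv as [v [(p & rt & st & Hp & Grt & Gst & Lrt & Lst & ->) Hv]].
    assert (Hgrid : forall a, In a (comp y) -> exists q, In q G /\ Rabs (a - q) <= h / 2).
    { intros a Ha. unfold comp in Ha. apply filter_In in Ha. destruct Ha as [Ha _].
      apply (gap_in _ _ Gst) in Ha.
      destruct (l1_in rt st ltac:(lia) a Ha) as [b [Hb1 Hb2]].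
      assert (HbV : In b V).
      { destruct (gap_in_rev _ _ Grt b Hb1) as [->|Hb]; [left; auto|].
        destruct (Req_EM_T b 0) as [->|Hb0]; [left; auto|].
        right. unfold comp. apply filter_In. split; auto. unfold nz.
        destruct (Req_EM_T b 0); auto; contradiction. }
      set (s := (a - b) / h + INR M).
      assert (Hs : 0 <= s <= INR (2 * M)).
      { rewrite mult_INR. simpl INR.
        assert (Habs : Rabs (a - b) <= 2 * rho) by (rewrite Rabs_minus_sym; lra).
        assert (Habs2 : - (2 * rho) <= a - b <= 2 * rho) by (revert Habs; unfold Rabs; destruct (Rcase_abs (a - b)); intros; lra). clear Habs.
        unfold s. split.
        - apply Rle_trans with (- (2 * rho) / h + INR M).
          + rewrite <- HM. right. field. lra.
          + apply Rplus_le_compat_r. unfold Rdiv. apply Rmult_le_compat_r.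
            left; apply Rinv_0_lt_compat; auto. lra.
        - apply Rle_trans with (2 * rho / h + INR M).
          + apply Rplus_le_compat_r. unfold Rdiv. apply Rmult_le_compat_r.
            left; apply Rinv_0_lt_compat; auto. lra.
          + rewrite <- HM. right. field. lra. }
      destruct (round_nat _ s Hs) as [n [Hn1 Hn2]].
      exists (b + (INR n - INR M) * h). split.
      - unfold G. apply in_flat_map. exists b. split; auto.
        apply in_map_iff. exists n. split; [reflexivity|apply in_seq; lia].
      - replace (a - (b + (INR n - INR M) * h)) with ((s - INR n) * h)
          by (unfold s; field; lra).
        rewrite Rabs_mult, (Rabs_right h) by lra.
        apply Rle_trans with (1/2 * h). apply Rmult_le_compat_r; lra. lra. }
    destruct (pick_list (fun a q => In q G /\ Rabs (a - q) <= h / 2) (comp y) Hgrid)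
      as [g Hgl].
    assert (HQ : Q g y).
    { split; auto. split; auto. unfold close. eapply Forall2_impl; [|exact Hgl].
      simpl; intros; tauto. }
    exists (cf g). split.
    + apply in_map. apply lists_upto_in.
      * rewrite <- (Forall2_length Hgl). apply HS; auto.
      * intros q Hq. destruct (Forall2_in_r _ _ _ Hgl q Hq) as [a Ha]. apply Ha.
    + split; auto.
      destruct (Hcf g) as [Sc Hc]. destruct (Hc (ex_intro _ y HQ)) as [_ [_ Hcl]].
      pose proof (Forall2_comb _ _ _ _ Hcl (proj2 (proj2 HQ))) as Hcomb.
      replace (2 * (h / 2)) with h in Hcomb by field.
      destruct (align (length (cf g) + length y) (cf g) y ltac:(lia)
                 (Forall2_length Hcomb)) as (rt' & st' & H1 & H2 & H3 & H4).
      apply Rle_trans with (l1_dist rt' st').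
      * apply (proj1 (d_erp_glb (cf g) y)).
        exists (length rt'), rt', st'. repeat split; auto.
        pose proof (gap_len _ _ H1). pose proof (gap_len _ _ H2). lia.
      * rewrite H4. eapply Rle_trans; [apply l1_forall2; exact Hcomb|].
        apply Rle_trans with (INR k * h).
        -- apply Rmult_le_compat_r; [lra|]. apply le_INR. apply HS; auto.
        -- unfold h. right. field. lra.
Qed.
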